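(* For all non-negative integers $m$ and $l$, $$\binom{m+l}{m}=\sum_{n=0}^{m}\frac{1}{2^{m+n}}\binom{m+n}{m}\binom{2l+m-n}{2l}.$$ *)

(* Defs.v *)
From mathcomp Require Import all_boot all_order all_algebra.

(* Main.v *)
Require Import Defs.
From mathcomp Require Import all_boot all_order all_algebra.
From mathcomp Require Import ring lra zify.
Import GRing.Theory Num.Theory.
Local Open Scope ring_scope.

Lemma R3n L k : ('C(L + 2 + k, L + 2) * ((L+2)*(L+1)) =
   'C(L + k, L) * ((L+k+2)*(L+k+1)))%N.
Proof.
have h1 := mul_bin_diag (L+k+2) (L+1).
have h2 := mul_bin_diag (L+k+1) L.
have e1 : (L+k+2).-1 = (L + k + 1)%N by lia.
have e2 : (L+k+1).-1 = (L + k)%N by lia.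
rewrite e1 in h1; rewrite e2 in h2.
have e3 : (L + 2 + k = L + k + 2)%N by lia.
have e4 : ((L + 1).+1 = L + 2)%N by lia.
rewrite e4 in h1; rewrite e3.
have h1' := congr1 (muln (L+1)) h1.
have h2' := congr1 (muln (L+k+2)) h2.
have e5 : L.+1 = (L+1)%N by lia. rewrite e5 in h2 h2'. nia.
Qed.

Lemma R2n L k : ('C(L + k + 1, L) * (k+1) = 'C(L + k, L) * (L + k + 1))%N.
Proof.
have h := mul_bin_down (L+k+1) L.
have e1 : (L+k+1).-1 = (L + k)%N by lia.
have e2 : (L+k+1 - L = k + 1)%N by lia.
rewrite e1 e2 in h. lia.
Qed.

Lemma R1n m j : ('C(m + j.+1, m) * j.+1 = 'C(m + j, m) * (m + j.+1))%N.
Proof.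
have h := mul_bin_down (m+j.+1) m.
have e1 : (m+j.+1).-1 = (m + j)%N by lia.
have e2 : (m+j.+1 - m = j.+1)%N by lia.
rewrite e1 e2 in h. lia.
Qed.

Definition w (m n : nat) : rat := (2 ^+ (m + n))^-1 * ('C(m + n, m))%:R.
Definition c (m L n : nat) : rat := ('C(L + m - n, L))%:R.
Definition K (m L n : nat) : rat :=
  w m n * c m L n * ((m - n) * (m + n + 1))%:R / (L.+1)%:R.
Definition Kp m L i := if i is i'.+1 then K m L i' else 0.

Lemma step m L n : (n <= m)%N ->
  (L+2)%:R * (w m n * c m (L+2) n) - (2 * m + L + 2)%:R * (w m n * c m L n)
  = Kp m L n.+1 - Kp m L n.
Proof.
move=> Hn; have [k Hk] : exists k, m = (n + k)%N by exists (m - n)%N; lia.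
subst m.
have R3 := congr1 (fun x : nat => x%:R : rat) (R3n L k).
rewrite /= !natrM in R3.
have eL : (L + 2 + (n + k) - n = L + 2 + k)%N by lia.
have eL' : (L + (n + k) - n = L + k)%N by lia.
have nz1 : ((L+2)*(L+1))%:R != 0 :> rat by rewrite pnatr_eq0; lia.
have X2 : ('C(L + 2 + k, L + 2))%:R = ('C(L + k, L))%:R * ((L+k+2)*(L+k+1))%:R
   / ((L+2)*(L+1))%:R :> rat.
  by apply: (mulIf nz1); rewrite divfK // !natrM R3.
case: n Hn eL eL' => [|j] Hn eL eL'.
  rewrite /Kp /K /w /c /= !add0n !addn0 !subn0 X2 binn.
  have eS : L.+1 = (L+1)%N by lia.
  rewrite eS subr0 !natrM !natrD.
  have nzL2 : (L%:R + 2%:R) != 0 :> rat by rewrite -natrD pnatr_eq0; lia.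
  have nzL1 : (L%:R + 1%:R) != 0 :> rat by rewrite -natrD pnatr_eq0; lia.
  have nz2 : (2 ^+ k : rat) != 0 by rewrite expf_neq0.
  set x := 'C(L + k, L)%:R.
  field. by rewrite nz2 nzL2 nzL1.
have R1 := congr1 (fun x : nat => x%:R : rat) (R1n (j.+1 + k) j).
have R2 := congr1 (fun x : nat => x%:R : rat) (R2n L k).
rewrite /= !natrM in R1 R2.
have nzj : (j.+1)%:R != 0 :> rat by rewrite pnatr_eq0.
have nzk : (k + 1)%:R != 0 :> rat by rewrite pnatr_eq0; lia.
have X1 : ('C(j.+1 + k + j.+1, j.+1 + k))%:R =
   ('C(j.+1 + k + j, j.+1 + k))%:R * (j.+1 + k + j.+1)%:R / (j.+1)%:R :> rat.
  by apply: (mulIf nzj); rewrite divfK // R1.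
have X3 : ('C(L + k + 1, L))%:R = ('C(L + k, L))%:R * (L + k + 1)%:R / (k + 1)%:R :> rat.
  by apply: (mulIf nzk); rewrite divfK // R2.
have KpS : forall i, Kp (j.+1 + k) L i.+1 = K (j.+1 + k) L i by [].
rewrite !KpS /K /w /c.
have e1 : (L + (j.+1 + k) - j = L + k + 1)%N by lia.
have e2 : (j.+1 + k - j.+1 = k)%N by lia.
have e3 : (j.+1 + k - j = k + 1)%N by lia.
rewrite eL eL' e1 e2 e3 X1 X2 X3 (addnS (j.+1 + k) j) (exprS _ (j.+1 + k + j)).
set x := 'C(L + k, L)%:R.
set y := 'C(j.+1 + k + j, _)%:R.
have nz2 : (2 ^+ (j.+1 + k + j) : rat) != 0 by rewrite expf_neq0.
set p := (2 ^+ (j.+1 + k + j) : rat).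
rewrite mul2n -addnn.
rewrite !natrM !natrD -!natr1 !natrD.
have nzL2 : (L%:R + 1 + 1) != 0 :> rat by rewrite !natr1 pnatr_eq0.
have nzL1 : (L%:R + 1) != 0 :> rat by rewrite !natr1 pnatr_eq0.
have nzj' : (j%:R + 1) != 0 :> rat by rewrite !natr1 pnatr_eq0.
have nzk' : (k%:R + 1) != 0 :> rat by rewrite !natr1 pnatr_eq0.
rewrite !add0r.
have nzL2' : (L%:R + 2) != 0 :> rat by rewrite -natrD pnatr_eq0 addn2.
field. by rewrite nzL1 nzk' nz2 nzj' nzL2'.
Qed.

Lemma wS m i : w m.+1 i.+1 = (w m.+1 i + w m i.+1) / 2.
Proof.
rewrite /w.
have e1 : (m.+1 + i.+1 = (m + i.+1).+1)%N by lia.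
have e2 : (m.+1 + i = m + i.+1)%N by lia.
rewrite e1 binS e2 exprS natrD.
have nz : (2 ^+ (m + i.+1) : rat) != 0 by rewrite expf_neq0.
field. by rewrite nz.
Qed.

Lemma w0 m : w m 0 = (2 ^+ m)^-1.
Proof. by rewrite /w addn0 binn mulr1. Qed.

Lemma wlast m : w m.+1 m.+1 = w m m.+1.
Proof.
rewrite /w.
have e1 : (m.+1 + m.+1 = (m + m.+1).+1)%N by lia.
rewrite e1 binS exprS.
have e3 : 'C(m + m.+1, m.+1) = 'C(m + m.+1, m).
  by have := @bin_sub (m + m.+1) m (leq_addr _ _); rewrite addKn.
rewrite e3 natrD.
have nz : (2 ^+ (m + m.+1) : rat) != 0 by rewrite expf_neq0.
field. by rewrite nz.
Qed.

Definition B m := \sum_(i < m.+1) w m i.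

Lemma BS m : B m.+1 = B m.
Proof.
have h1 : B m.+1 = w m.+1 0 + \sum_(i < m.+1) (w m.+1 i + w m i.+1) / 2.
  by rewrite /B big_ord_recl; congr (_ + _); apply: eq_bigr => i _; rewrite wS.
have h2 : B m.+1 = \sum_(i < m.+1) w m.+1 i + w m.+1 m.+1.
  by rewrite /B big_ord_recr.
have h3 : B m = w m 0 + \sum_(i < m) w m i.+1.
  by rewrite /B big_ord_recl.
have h4 : \sum_(i < m.+1) w m i.+1 = \sum_(i < m) w m i.+1 + w m m.+1.
  by rewrite big_ord_recr.
rewrite -mulr_suml big_split /= h4 w0 exprS invfM in h1.
rewrite wlast in h2. rewrite w0 in h3.
rewrite h3 h2. rewrite h2 in h1.
move: h1.
set a := \sum_(i < m.+1) w m.+1 i.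
set b := \sum_(i < m) w m i.+1.
set e := w m m.+1.
set q := (2 ^+ m : rat)^-1.
move=> h1. lra.
Qed.

Lemma B1 m : B m = 1.
Proof.
elim: m => [|m IH]; last by rewrite BS.
by rewrite /B big_ord1 w0 expr0 invr1.
Qed.

Definition F m L := \sum_(0 <= n < m.+1) w m n * c m L n.

Lemma recL m L : (L+2)%:R * F m (L+2) = (2 * m + L + 2)%:R * F m L.
Proof.
apply/eqP; rewrite -subr_eq0; apply/eqP.
rewrite /F !mulr_sumr -sumrB.
rewrite (telescope_sumr_eq (Kp m L)) //.
  by rewrite /Kp /K subnn mul0n mulr0 mul0r subr0.
by move=> k /andP [_ hk]; rewrite -step.
Qed.

Lemma binrec m l : ('C(m + l.+1, m) * l.+1 = 'C(m + l, m) * (m + l.+1))%N.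
Proof.
have h := mul_bin_down (m + l.+1) m.
have e1 : (m+l.+1).-1 = (m + l)%N by lia.
have e2 : (m+l.+1 - m = l.+1)%N by lia.
rewrite e1 e2 in h. lia.
Qed.

Lemma Fmain m l : F m (2 * l) = ('C(m + l, m))%:R.
Proof.
elim: l => [|l IH].
  rewrite muln0 addn0 binn /F big_mkord.
  rewrite -[RHS](B1 m) /B; apply: eq_bigr => i _.
  by rewrite /c bin0 mulr1.
have e : (2 * l.+1 = 2 * l + 2)%N by lia.
have nz : ((2 * l + 2)%:R : rat) != 0 by rewrite pnatr_eq0; lia.
apply: (mulfI nz); rewrite e recL IH.
have R := congr1 (fun x : nat => x%:R : rat) (binrec m l).
rewrite /= !natrM in R.
have nzl : ((l.+1)%:R : rat) != 0 by rewrite pnatr_eq0.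
have -> : ('C(m + l.+1, m))%:R = ('C(m + l, m))%:R * (m + l.+1)%:R / (l.+1)%:R :> rat.
  by apply: (mulIf nzl); rewrite divfK // R.
rewrite -?natr1 ?natrD ?natrM -?natr1 ?natrD.
rewrite -natr1 in nzl.
field. by rewrite nzl.
Qed.


Theorem mainTheorem3 (m l : nat) :
  ('C(m + l, m))%:R =
  \sum_(0 <= n < m.+1)
    ((2 ^+ (m + n))^-1 * ('C(m + n, m))%:R * ('C(2 * l + m - n, 2 * l))%:R : rat).
Proof.
by rewrite -Fmain.
Qed.
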